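(* Let $\rho=\eta[r,\alpha]$ be a qubit state with $r\neq g$, $J$ the closed interval with endpoints $r$ and $1-\lambda r$, and $S(s):=S(\eta[s,\kappa_s])$ for $s\in J$. For $\bar s\in J$ define \[ \xi(\bar s):=\inf\Big\{\sum_jp_jS(s_j):\ (p_j)\text{ a finite probability vector},\ s_j\in J,\ \sum_jp_js_j=\bar s\Big\}. \] Then the infimum is attained with all $s_j\in\{r,1-\lambda r\}$, and \[ \xi(\bar s)=q_{\bar s}S(\rho)+(1-q_{\bar s})\,h(1-\lambda r),\qquad q_{\bar s}=\frac{\bar s+\lambda r-1}{(1+\lambda)r-1}. \] Moreover, $I_{\mathrm{th}}(\rho)=\max_{\bar s\in J}\big[h(\bar s)-\xi(\bar s)\big]$.
   Context: Qubit memory with Hamiltonian $E_0|0\rangle\langle0|+E_1|1\rangle\langle1|$ at temperature $T$; $\lambda=e^{-(E_1-E_0)/k_{\mathrm B}T}$, $g=1/(1+\lambda)$. $\eta[r,\alpha]$ denotes the density matrix $\begin{pmatrix} r&\alpha\\ \alpha^*&1-r\end{pmatrix}$ in the energy basis. $\kappa_s=|\alpha|\frac{\sqrt{(\lambda s+r-1)(\lambda r+s-1)}}{|(\lambda+1)r-1|}$. $h(x)=-x\log_2x-(1-x)\log_2(1-x)$; $S$ is the von Neumann entropy (base 2). The set of states reachable from $\rho$ by thermal operations is $\vartheta(\rho)=\{\eta[s,\beta]: s\in J,\ |\beta|\le\kappa_s\}$. A code is a finite ensemble $\{(p_k,\sigma^{(k)})\}$ with Holevo information $\chi=S(\sum_kp_k\sigma^{(k)})-\sum_kp_kS(\sigma^{(k)})$;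 $I_{\mathrm{th}}(\rho)$ is the supremum of $\chi$ over codes with all codewords in $\vartheta(\rho)$. *)

(* Defs.v *)
From Stdlib Require Import Reals List.
Open Scope R_scope.

(* Complex numbers as pairs (real part, imaginary part). *)
Definition Cpx := (R * R)%type.
Definition cnorm (z : Cpx) : R := sqrt (fst z ^ 2 + snd z ^ 2).

Definition plog2 (x : R) : R := if Rle_dec x 0 then 0 else x * (ln x / ln 2).

Definition h (x : R) : R := - plog2 x - plog2 (1 - x).

(* Eigenvalues of eta[s,b] = [[s, b],[b^*, 1-s]] (a 2x2 Hermitian matrix
   of trace 1 and determinant s(1-s) - |b|^2). *)
Definition eig_p (s : R) (b : Cpx) : R :=
  (1 + sqrt ((2 * s - 1) ^ 2 + 4 * cnorm b ^ 2)) / 2.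
Definition eig_m (s : R) (b : Cpx) : R :=
  (1 - sqrt ((2 * s - 1) ^ 2 + 4 * cnorm b ^ 2)) / 2.

Definition vnS (s : R) (b : Cpx) : R := - plog2 (eig_p s b) - plog2 (eig_m s b).

Definition lamb (E0 E1 kB T : R) : R := exp (- (E1 - E0) / (kB * T)).
Definition gibbs (lam : R) : R := 1 / (1 + lam).

Definition kappa (lam r : R) (alpha : Cpx) (s : R) : R :=
  cnorm alpha * sqrt ((lam * s + r - 1) * (lam * r + s - 1))
  / Rabs ((lam + 1) * r - 1).

Definition inJ (lam r s : R) : Prop :=
  Rmin r (1 - lam * r) <= s <= Rmax r (1 - lam * r).

Definition Sfun (lam r : R) (alpha : Cpx) (s : R) : R :=
  vnS s (kappa lam r alpha s, 0).

Definition sumR {A : Type} (f : A -> R) (l : list A) : R :=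
  fold_right (fun x acc => f x + acc) 0 l.

Definition is_decomp (lam r sbar : R) (d : list (R * R)) : Prop :=
  Forall (fun ps => 0 <= fst ps /\ inJ lam r (snd ps)) d /\
  sumR fst d = 1 /\
  sumR (fun ps => fst ps * snd ps) d = sbar.

Definition decomp_value (lam r : R) (alpha : Cpx) (d : list (R * R)) : R :=
  sumR (fun ps => fst ps * Sfun lam r alpha (snd ps)) d.

Definition xi_set (lam r : R) (alpha : Cpx) (sbar : R) (v : R) : Prop :=
  exists d, is_decomp lam r sbar d /\ v = decomp_value lam r alpha d.

Definition is_lower_bound (E : R -> Prop) (m : R) : Prop :=
  forall x, E x -> m <= x.
Definition is_glb (E : R -> Prop) (m : R) : Prop :=
  is_lower_bound E m /\ (forall b, is_lower_bound E b -> b <= m).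

Definition in_theta (lam r : R) (alpha : Cpx) (sb : R * Cpx) : Prop :=
  inJ lam r (fst sb) /\ cnorm (snd sb) <= kappa lam r alpha (fst sb).

Definition is_code (lam r : R) (alpha : Cpx) (c : list (R * (R * Cpx))) : Prop :=
  Forall (fun k => 0 <= fst k /\ in_theta lam r alpha (snd k)) c /\
  sumR fst c = 1.

(* Holevo information: S(sum p_k sigma_k) - sum p_k S(sigma_k);
   sum p_k eta[s_k,beta_k] = eta[sum p_k s_k, sum p_k beta_k]. *)
Definition holevo (c : list (R * (R * Cpx))) : R :=
  let sav := sumR (fun k => fst k * fst (snd k)) c in
  let bav : Cpx := (sumR (fun k => fst k * fst (snd (snd k))) c,
                  sumR (fun k => fst k * snd (snd (snd k))) c) in
  vnS sav bav - sumR (fun k => fst k * vnS (fst (snd k)) (snd (snd k))) c.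

Definition chi_set (lam r : R) (alpha : Cpx) (v : R) : Prop :=
  exists c, is_code lam r alpha c /\ v = holevo c.

(* Main.v *)
Require Import Defs.
From Stdlib Require Import Reals List Lra Psatz.
From Coquelicot Require Import Coquelicot.
Import List.
Open Scope R_scope.

Lemma ln_le_sub1 y : 0 < y -> ln y <= y - 1.
Proof. intros Hy. pose proof (exp_ineq1_le (ln y)). rewrite exp_ln in H; lra. Qed.

Lemma ln2_pos : 0 < ln 2.
Proof. rewrite <- ln_1. apply ln_increasing; lra. Qed.

Lemma xlnx_bound y : 0 < y <= 1 -> Rabs (y * ln y) <= 2 * sqrt y.
Proof.
  intros [H0 H1].
  assert (Hs : 0 < sqrt y) by (apply sqrt_lt_R0; lra).
  assert (Hsy : sqrt y * sqrt y = y) by (apply sqrt_sqrt; lra).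
  assert (Hl : ln y <= 0) by (rewrite <- ln_1; apply ln_le; lra).
  assert (Hinv : ln (/ sqrt y) <= / sqrt y - 1) by (apply ln_le_sub1; apply Rinv_0_lt_compat; lra).
  assert (Hln : ln y = - 2 * ln (/ sqrt y)).
  { rewrite ln_Rinv by lra. rewrite <- Hsy at 1. rewrite ln_mult by lra. ring. }
  rewrite Rabs_left1.
  2:{ assert (0 <= y) by lra. nra. }
  rewrite Hln.
  assert (y * / sqrt y = sqrt y) by (rewrite <- Hsy at 1; field; lra).
  nra.
Qed.

Lemma derive_cont f x l : is_derive f x l -> continuity_pt f x.
Proof. intros H. apply derivable_continuous_pt. exists l. apply is_derive_Reals; exact H. Qed.

Lemma plog2_cont x : continuity_pt plog2 x.
Proof.
  destruct (Rtotal_order x 0) as [Hx|[Hx|Hx]].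
  - apply continuity_pt_locally_ext with (f := fun _ => 0) (a := - x).
    + lra.
    + intros y Hy. unfold Rdist in Hy. unfold plog2.
      destruct (Rle_dec y 0); [reflexivity|]. apply Rabs_def2 in Hy. lra.
    + apply continuity_pt_const. intros a b; reflexivity.
  - subst x. intros eps Heps.
    set (d := Rmin 1 ((eps * ln 2 / 2) ^ 2)).
    pose proof ln2_pos.
    assert (Hd : 0 < d).
    { unfold d. apply Rmin_pos; [lra|]. apply pow_lt. apply Rmult_lt_0_compat; [|lra]. nra. }
    exists d; split; [lra|].
    intros y [_ Hy]. simpl in Hy |- *. unfold R_dist in *. rewrite Rminus_0_r in Hy.
    unfold plog2 at 2. destruct (Rle_dec 0 0); [|lra]. rewrite Rminus_0_r.
    unfold plog2. destruct (Rle_dec y 0).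
    + rewrite Rabs_R0; lra.
    + assert (Hy1 : y <= 1).
      { apply Rabs_def2 in Hy. pose proof (Rmin_l 1 ((eps * ln 2 / 2) ^ 2)). fold d in H0. lra. }
      assert (Hy2 : y < (eps * ln 2 / 2) ^ 2).
      { apply Rabs_def2 in Hy. pose proof (Rmin_r 1 ((eps * ln 2 / 2) ^ 2)). fold d in H0. lra. }
      pose proof (xlnx_bound y (conj (Rnot_le_lt _ _ n) Hy1)).
      assert (Hsq : sqrt y < eps * ln 2 / 2).
      { rewrite <- (sqrt_pow2 (eps * ln 2 / 2)) by nra. apply sqrt_lt_1; nra. }
      replace (y * (ln y / ln 2)) with ((y * ln y) / ln 2) by (field; lra).
      unfold Rdiv. rewrite Rabs_mult. rewrite (Rabs_right (/ ln 2)).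
      2: { apply Rle_ge, Rlt_le, Rinv_0_lt_compat; lra. }
      apply Rmult_lt_reg_r with (ln 2); [lra|].
      rewrite Rmult_assoc, Rinv_l by lra. nra.
  - apply continuity_pt_locally_ext with (f := fun y => y * (ln y / ln 2)) (a := x).
    + lra.
    + intros y Hy. unfold Rdist in Hy. unfold plog2.
      destruct (Rle_dec y 0); [|reflexivity]. apply Rabs_def2 in Hy. lra.
    + eapply derive_cont. auto_derive. lra. reflexivity.
Qed.

Lemma mvt_open f df a b : a < b ->
  (forall x, a < x < b -> is_derive f x (df x)) ->
  (forall x, a <= x <= b -> continuity_pt f x) ->
  exists c, a < c < b /\ f b - f a = df c * (b - a).
Proof.
  intros Hab Hd Hc.
  pose (pr1 := fun c (P : a < c < b) =>
     exist (fun l => derivable_pt_abs f c l) (df c) (proj1 (is_derive_Reals _ _ _) (Hd c P))).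
  pose (pr2 := fun c (P : a < c < b) => derivable_pt_id c).
  destruct (MVT f id a b pr1 pr2 Hab Hc) as [c [P HP]].
  { intros; apply derivable_continuous_pt, derivable_pt_id. }
  exists c; split; [exact P|].
  unfold pr2 in HP. rewrite derive_pt_id in HP. simpl in HP. unfold id in HP. lra.
Qed.

Definition ell (v : R) : R := ln ((1 + v) / 2) - ln ((1 - v) / 2).
Definition dell (v : R) : R := 2 / (1 - v ^ 2).

Lemma ell_deriv v : -1 < v < 1 -> is_derive ell v (dell v).
Proof.
  intros Hv. unfold ell, dell. auto_derive.
  - repeat split; lra.
  - field. repeat split; try lra. nra.
Qed.

Lemma ell_cont v : -1 < v < 1 -> continuity_pt ell v.
Proof. intros; eapply derive_cont, ell_deriv; auto. Qed.

Lemma ell0 : ell 0 = 0.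
Proof. unfold ell. replace (1+0) with (1-0) by ring. ring. Qed.

Lemma ell_slope a b : 0 < a -> a <= b -> b < 1 -> 0 <= ell a /\ ell a / a <= ell b / b.
Proof.
  intros Ha Hab Hb.
  destruct (mvt_open ell dell 0 a Ha) as [c1 [Hc1 E1]].
  { intros; apply ell_deriv; lra. }
  { intros; apply ell_cont; lra. }
  rewrite ell0 in E1.
  assert (D1 : 0 < dell c1) by (unfold dell; apply Rdiv_lt_0_compat; nra).
  assert (Ea : ell a / a = dell c1).
  { replace (ell a) with (dell c1 * a) by lra. field; lra. }
  split; [nra|].
  destruct (Req_dec a b) as [<-|Hne]; [lra|].
  assert (Hab' : a < b) by lra.
  destruct (mvt_open ell dell a b Hab') as [c2 [Hc2 E2]].
  { intros; apply ell_deriv; lra. }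
  { intros; apply ell_cont; lra. }
  assert (dell c1 <= dell c2).
  { unfold dell. apply Rmult_le_compat_l; [lra|]. apply Rinv_le_contravar; nra. }
  rewrite Ea. assert (ell b >= dell c1 * b) by nra.
  apply Rmult_le_reg_r with b; [lra|].
  unfold Rdiv. rewrite Rmult_assoc, Rinv_l by lra. lra.
Qed.

Definition Phi (u : R) : R := - plog2 ((1 + sqrt u) / 2) - plog2 ((1 - sqrt u) / 2).
Definition dPhi (u : R) : R := - ell (sqrt u) / (4 * sqrt u * ln 2).

Lemma sqrt_in01 u : 0 < u < 1 -> 0 < sqrt u < 1.
Proof.
  intros Hu. split. apply sqrt_lt_R0; lra.
  rewrite <- sqrt_1. apply sqrt_lt_1; lra.
Qed.

Lemma Phi_deriv u : 0 < u < 1 -> is_derive Phi u (dPhi u).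
Proof.
  intros Hu.
  pose proof ln2_pos.
  apply is_derive_ext_loc with
    (f := fun t => - ((1 + sqrt t) / 2 * (ln ((1 + sqrt t) / 2) / ln 2))
                   - ((1 - sqrt t) / 2 * (ln ((1 - sqrt t) / 2) / ln 2))).
  - assert (Hd : 0 < Rmin u (1 - u)) by (apply Rmin_pos; lra).
    exists (mkposreal _ Hd). intros t Ht.
    unfold ball in Ht; simpl in Ht. unfold AbsRing_ball, abs, minus, plus, opp in Ht; simpl in Ht.
    apply Rabs_def2 in Ht. pose proof (Rmin_l u (1-u)). pose proof (Rmin_r u (1-u)).
    destruct (sqrt_in01 t) as [Hs1 Hs2]; [lra|].
    unfold Phi, plog2.
    destruct (Rle_dec ((1 + sqrt t) / 2) 0); [lra|].
    destruct (Rle_dec ((1 - sqrt t) / 2) 0); [lra|]. reflexivity.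
  - destruct (sqrt_in01 u Hu) as [Hs1 Hs2].
    auto_derive.
    + repeat split; lra.
    + unfold dPhi, ell. unfold Rminus, Rdiv. field. repeat split; lra.
Qed.

Lemma cont_plog2_comp g x : continuity_pt g x -> continuity_pt (fun y => plog2 (g y)) x.
Proof. intros H. exact (continuity_pt_comp g plog2 x H (plog2_cont _)). Qed.

Lemma cont_aff_sqrt a u : 0 <= u -> continuity_pt (fun t => (1 + a * sqrt t) / 2) u.
Proof.
  intros Hu. apply (continuity_pt_comp sqrt (fun y => (1 + a * y) / 2) u).
  - apply continuity_pt_sqrt; auto.
  - eapply derive_cont. auto_derive. trivial. reflexivity.
Qed.

Lemma Phi_cont u : 0 <= u -> continuity_pt Phi u.
Proof.
  intros Hu. unfold Phi.
  apply continuity_pt_minus.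
  - apply continuity_pt_opp.
    apply cont_plog2_comp with (g := fun t => (1 + sqrt t) / 2).
    apply continuity_pt_ext with (f := fun t => (1 + 1 * sqrt t) / 2).
    { intros; rewrite Rmult_1_l; reflexivity. }
    apply cont_aff_sqrt; auto.
  - apply cont_plog2_comp with (g := fun t => (1 - sqrt t) / 2).
    apply continuity_pt_ext with (f := fun t => (1 + -1 * sqrt t) / 2).
    { intros; f_equal; ring. }
    apply cont_aff_sqrt; auto.
Qed.

Lemma dPhi_facts u1 u2 : 0 < u1 -> u1 <= u2 -> u2 < 1 -> dPhi u2 <= dPhi u1 /\ dPhi u1 <= 0.
Proof.
  intros H1 H12 H2. pose proof ln2_pos.
  destruct (sqrt_in01 u1) as [a1 a2]; [lra|].
  destruct (sqrt_in01 u2) as [b1 b2]; [lra|].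
  assert (Hs : sqrt u1 <= sqrt u2) by (apply sqrt_le_1_alt; lra).
  destruct (ell_slope (sqrt u1) (sqrt u2) a1 Hs b2) as [E0 E1].
  unfold dPhi.
  assert (K : forall v, 0 < v -> - ell v / (4 * v * ln 2) = - (ell v / v) / (4 * ln 2)).
  { intros v Hv. field. lra. }
  rewrite !K by lra. split.
  - unfold Rdiv. apply Rmult_le_compat_r. apply Rlt_le, Rinv_0_lt_compat; lra. lra.
  - unfold Rdiv. apply Rmult_le_0_r. 2: apply Rlt_le, Rinv_0_lt_compat; lra.
    assert (0 <= ell (sqrt u1) * / sqrt u1).
    { apply Rmult_le_pos; [lra|]. apply Rlt_le, Rinv_0_lt_compat; lra. }
    lra.
Qed.

Lemma Phi_nonincr x y : 0 <= x -> x <= y -> y <= 1 -> Phi y <= Phi x.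
Proof.
  intros Hx Hxy Hy.
  destruct (Req_dec x y) as [<-|Hne]; [lra|].
  assert (Hlt : x < y) by lra.
  destruct (mvt_open Phi dPhi x y Hlt) as [c [Hc E]].
  { intros; apply Phi_deriv; lra. }
  { intros; apply Phi_cont; lra. }
  destruct (dPhi_facts c c) as [_ Hd]; try lra.
  nra.
Qed.

Lemma Phi_concave_lt x y t : 0 <= x -> x < y -> y <= 1 -> 0 < t < 1 ->
  t * Phi x + (1 - t) * Phi y <= Phi (t * x + (1 - t) * y).
Proof.
  intros Hx Hxy Hy Ht.
  set (m := t * x + (1 - t) * y).
  assert (Hm1 : x < m) by (unfold m; nra).
  assert (Hm2 : m < y) by (unfold m; nra).
  destruct (mvt_open Phi dPhi x m Hm1) as [c1 [Hc1 E1]].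
  { intros; apply Phi_deriv; lra. }
  { intros; apply Phi_cont; lra. }
  destruct (mvt_open Phi dPhi m y Hm2) as [c2 [Hc2 E2]].
  { intros; apply Phi_deriv; lra. }
  { intros; apply Phi_cont; lra. }
  destruct (dPhi_facts c1 c2) as [Hd _]; try lra.
  assert (Hmx : m - x = (1 - t) * (y - x)) by (unfold m; ring).
  assert (Hym : y - m = t * (y - x)) by (unfold m; ring).
  rewrite Hmx in E1. rewrite Hym in E2.
  assert (0 <= t * (1 - t) * (y - x) * (dPhi c1 - dPhi c2)).
  { apply Rmult_le_pos; [|lra]. apply Rmult_le_pos; [|lra]. nra. }
  nra.
Qed.

Lemma Phi_concave x y t : 0 <= x <= 1 -> 0 <= y <= 1 -> 0 <= t <= 1 ->
  t * Phi x + (1 - t) * Phi y <= Phi (t * x + (1 - t) * y).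
Proof.
  intros Hx Hy Ht.
  destruct (Req_dec t 0) as [->|Ht0].
  { replace (0 * x + (1 - 0) * y) with y by ring. lra. }
  destruct (Req_dec t 1) as [->|Ht1].
  { replace (1 * x + (1 - 1) * y) with x by ring. lra. }
  destruct (Rtotal_order x y) as [H|[H|H]].
  - apply Phi_concave_lt; lra.
  - subst y. replace (t * x + (1 - t) * x) with x by ring. lra.
  - pose proof (Phi_concave_lt y x (1 - t) ltac:(lra) H ltac:(lra) ltac:(lra)).
    replace (1 - (1 - t)) with t in H0 by ring.
    replace (t * x + (1 - t) * y) with ((1 - t) * y + t * x) by ring. lra.
Qed.

Lemma vnS_Phi s b : vnS s b = Phi ((2 * s - 1) ^ 2 + 4 * cnorm b ^ 2).
Proof. reflexivity. Qed.

Lemma h_Phi s : h s = Phi ((2 * s - 1) ^ 2).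
Proof.
  unfold Phi, h.
  replace ((2 * s - 1) ^ 2) with (Rsqr (2 * s - 1)) by (unfold Rsqr; ring).
  rewrite sqrt_Rsqr_abs.
  destruct (Rle_dec 0 (2 * s - 1)).
  - rewrite Rabs_right by lra.
    replace ((1 + (2 * s - 1)) / 2) with s by field.
    replace ((1 - (2 * s - 1)) / 2) with (1 - s) by field. reflexivity.
  - rewrite Rabs_left by lra.
    replace ((1 + - (2 * s - 1)) / 2) with (1 - s) by field.
    replace ((1 - - (2 * s - 1)) / 2) with s by field. ring.
Qed.

Lemma cnorm_nonneg b : 0 <= cnorm b.
Proof. apply sqrt_pos. Qed.

Lemma cnorm_k0 k : 0 <= k -> cnorm (k, 0) = k.
Proof. intros. unfold cnorm; cbn [fst snd]. replace (k^2 + 0^2) with (k^2) by ring. apply sqrt_pow2; auto. Qed.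

Lemma cnorm_opp a b : cnorm (- a, - b) = cnorm (a, b).
Proof. unfold cnorm; cbn [fst snd]. f_equal. ring. Qed.

Lemma vnS_zero s : vnS s (0, 0) = h s.
Proof.
  rewrite vnS_Phi, h_Phi. rewrite cnorm_k0 by lra. f_equal. ring.
Qed.

Lemma Phi_1 : Phi 1 = 0.
Proof.
  unfold Phi. rewrite sqrt_1. replace ((1+1)/2) with 1 by field. replace ((1-1)/2) with 0 by field.
  unfold plog2. destruct (Rle_dec 1 0); [lra|]. destruct (Rle_dec 0 0); [|lra].
  rewrite ln_1. unfold Rdiv. ring.
Qed.

Lemma Phi_gt1 u : 1 < u -> Phi u <= 0.
Proof.
  intros Hu. pose proof ln2_pos.
  assert (Hs : 1 < sqrt u) by (rewrite <- sqrt_1; apply sqrt_lt_1; lra).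
  unfold Phi, plog2.
  destruct (Rle_dec ((1 - sqrt u) / 2) 0); [|lra].
  destruct (Rle_dec ((1 + sqrt u) / 2) 0); [lra|].
  assert (0 < ln ((1 + sqrt u) / 2)) by (rewrite <- ln_1; apply ln_increasing; lra).
  assert (0 <= (1 + sqrt u) / 2 * (ln ((1 + sqrt u) / 2) / ln 2)).
  { apply Rmult_le_pos; [lra|]. apply Rlt_le, Rdiv_lt_0_compat; lra. }
  lra.
Qed.

Lemma Phi_mono_ext x y : 0 <= x <= 1 -> x <= y -> Phi y <= Phi x.
Proof.
  intros Hx Hxy. destruct (Rle_dec y 1).
  - apply Phi_nonincr; lra.
  - pose proof (Phi_gt1 y ltac:(lra)).
    pose proof (Phi_nonincr x 1 ltac:(lra) ltac:(lra) ltac:(lra)). rewrite Phi_1 in H0. lra.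
Qed.

Lemma cont_affine a b x : continuity_pt (fun s => a + b * s) x.
Proof. eapply derive_cont. auto_derive; [trivial|reflexivity]. Qed.

Lemma h_cont x : continuity_pt h x.
Proof.
  unfold h. apply continuity_pt_minus.
  - apply continuity_pt_opp, plog2_cont.
  - apply cont_plog2_comp with (g := fun t => 1 - t).
    apply continuity_pt_ext with (f := fun t => 1 + -1 * t). { intros; ring. }
    apply cont_affine.
Qed.


Definition Pq (lam r s : R) : R := (lam * s + r - 1) * (lam * r + s - 1).
Definition qf (lam r s : R) : R := (s + lam * r - 1) / ((1 + lam) * r - 1).
Definition Lf (lam r : R) (a : Cpx) (s : R) : R :=
  qf lam r s * vnS r a + (1 - qf lam r s) * h (1 - lam * r).

Lemma J_facts lam r s : 0 < lam < 1 -> 0 <= r <= 1 -> (1 + lam) * r - 1 <> 0 ->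
  inJ lam r s ->
  0 <= qf lam r s <= 1 /\ s = qf lam r s * r + (1 - qf lam r s) * (1 - lam * r) /\
  0 <= Pq lam r s /\ 0 <= s <= 1.
Proof.
  intros Hl Hr HD [H1 H2]. unfold qf, Pq.
  assert (Hs : s = (s + lam * r - 1) / ((1 + lam) * r - 1) * r
              + (1 - (s + lam * r - 1) / ((1 + lam) * r - 1)) * (1 - lam * r)) by (field; auto).
  destruct (Rlt_le_dec 0 ((1 + lam) * r - 1)) as [Dp|Dn].
  - rewrite Rmin_right in H1 by nra. rewrite Rmax_left in H2 by nra.
    split; [|split; [exact Hs|split]].
    + split.
      * apply Rdiv_le_0_compat; lra.
      * apply Rmult_le_reg_r with ((1 + lam) * r - 1); [lra|].
        unfold Rdiv. rewrite Rmult_assoc, Rinv_l by lra. lra.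
    + assert (0 <= lam * s + r - 1) by nra. apply Rmult_le_pos; lra.
    + nra.
  - assert (Dn' : (1 + lam) * r - 1 < 0) by lra.
    rewrite Rmin_left in H1 by nra. rewrite Rmax_right in H2 by nra.
    split; [|split; [exact Hs|split]].
    + replace ((s + lam * r - 1) / ((1 + lam) * r - 1)) with
        ((1 - lam * r - s) / (1 - (1 + lam) * r)) by (field; lra).
      split.
      * apply Rdiv_le_0_compat; lra.
      * apply Rmult_le_reg_r with (1 - (1 + lam) * r); [lra|].
        unfold Rdiv. rewrite Rmult_assoc, Rinv_l by lra. lra.
    + assert (lam * s + r - 1 <= 0) by nra.
      replace ((lam * s + r - 1) * (lam * r + s - 1)) with
        ((1 - lam * s - r) * (1 - lam * r - s)) by ring.
      apply Rmult_le_pos; lra.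
    + nra.
Qed.

Lemma inv_nonneg x : 0 <= x -> 0 <= / x.
Proof.
  intros H. destruct (Req_dec x 0) as [->|H0].
  - rewrite Rinv_0; lra.
  - apply Rlt_le, Rinv_0_lt_compat; lra.
Qed.

Lemma kappa_nonneg lam r a s : 0 <= kappa lam r a s.
Proof.
  unfold kappa, Rdiv. apply Rmult_le_pos.
  - apply Rmult_le_pos; [apply cnorm_nonneg|apply sqrt_pos].
  - apply inv_nonneg, Rabs_pos.
Qed.

Lemma kappa_sq lam r a s : (1 + lam) * r - 1 <> 0 -> 0 <= Pq lam r s ->
  kappa lam r a s ^ 2 = cnorm a ^ 2 * Pq lam r s / ((1 + lam) * r - 1) ^ 2.
Proof.
  intros HD HP. unfold kappa.
  assert (Rabs ((lam + 1) * r - 1) ^ 2 = ((1 + lam) * r - 1) ^ 2).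
  { rewrite pow2_abs. f_equal. ring. }
  assert (Rabs ((lam + 1) * r - 1) <> 0).
  { apply Rabs_no_R0. replace ((lam + 1) * r - 1) with ((1 + lam) * r - 1) by ring. auto. }
  unfold Rdiv. rewrite !Rpow_mult_distr.
  replace ((/ Rabs ((lam + 1) * r - 1)) ^ 2) with (/ (Rabs ((lam + 1) * r - 1) ^ 2)) by (field; auto).
  rewrite H. rewrite pow2_sqrt by (unfold Pq in HP; auto).
  unfold Pq. ring.
Qed.

Lemma kappa_r lam r a : (1 + lam) * r - 1 <> 0 -> kappa lam r a r = cnorm a.
Proof.
  intros HD. unfold kappa.
  replace ((lam * r + r - 1) * (lam * r + r - 1)) with (Rsqr ((lam + 1) * r - 1)) by (unfold Rsqr; ring).
  rewrite sqrt_Rsqr_abs. field. apply Rabs_no_R0.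
  replace ((lam + 1) * r - 1) with ((1 + lam) * r - 1) by ring. auto.
Qed.

Lemma kappa_e2 lam r a : kappa lam r a (1 - lam * r) = 0.
Proof.
  unfold kappa. replace (lam * r + (1 - lam * r) - 1) with 0 by ring.
  rewrite Rmult_0_r, sqrt_0. unfold Rdiv. ring.
Qed.

Lemma main_bound lam r a s b : 0 < lam < 1 -> 0 <= r <= 1 -> cnorm a ^ 2 <= r * (1 - r) ->
  (1 + lam) * r - 1 <> 0 -> inJ lam r s -> cnorm b <= kappa lam r a s ->
  Lf lam r a s <= vnS s b.
Proof.
  intros Hl Hr Ha HD HJ Hb.
  destruct (J_facts lam r s Hl Hr HD HJ) as [Hq [Hs [HP Hs01]]].
  set (q := qf lam r s) in *.
  set (D := (1 + lam) * r - 1) in *.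
  set (c := cnorm a ^ 2 / D ^ 2).
  assert (Hc : 0 <= c) by (unfold c, Rdiv; apply Rmult_le_pos; [nra|apply inv_nonneg; nra]).
  set (e2 := 1 - lam * r) in *.
  set (X1 := (2 * r - 1) ^ 2 + 4 * cnorm a ^ 2).
  set (X2 := (2 * e2 - 1) ^ 2).
  assert (HK : kappa lam r a s ^ 2 = c * Pq lam r s).
  { rewrite kappa_sq by auto. unfold c. fold D. unfold Rdiv. ring. }
  assert (Hid : q * X1 + (1 - q) * X2 - ((2 * s - 1) ^ 2 + 4 * c * Pq lam r s)
                = q * (1 - q) * (r - e2) ^ 2 * (4 + 4 * c * lam)).
  { assert (cnorm a ^ 2 = c * D ^ 2) by (unfold c; field; auto).
    unfold X1, X2. rewrite H. rewrite Hs. unfold Pq, e2, D. ring. }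
  assert (Hcomb : (2 * s - 1) ^ 2 + 4 * c * Pq lam r s <= q * X1 + (1 - q) * X2).
  { assert (0 <= q * (1 - q) * (r - e2) ^ 2 * (4 + 4 * c * lam)).
    { apply Rmult_le_pos; [apply Rmult_le_pos|]; [apply Rmult_le_pos; lra|apply pow2_ge_0|nra]. }
    lra. }
  assert (HX1 : 0 <= X1 <= 1).
  { unfold X1. assert ((2 * r - 1) ^ 2 = 1 - 4 * (r * (1 - r))) by ring.
    pose proof (pow2_ge_0 (cnorm a)). pose proof (pow2_ge_0 (2 * r - 1)). lra. }
  assert (HX2 : 0 <= X2 <= 1).
  { unfold X2, e2. assert ((2 * (1 - lam * r) - 1) ^ 2 = 1 - 4 * ((lam * r) * (1 - lam * r))) by ring.
    assert (0 <= lam * r <= 1) by nra.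
    pose proof (pow2_ge_0 (2 * (1 - lam * r) - 1)). nra. }
  assert (Hb2 : cnorm b ^ 2 <= c * Pq lam r s).
  { rewrite <- HK. pose proof (cnorm_nonneg b). pose proof (kappa_nonneg lam r a s). nra. }
  assert (HcX : q * X1 + (1 - q) * X2 <= 1) by nra.
  assert (0 <= c * Pq lam r s) by (apply Rmult_le_pos; auto).
  rewrite vnS_Phi.
  apply Rle_trans with (Phi ((2 * s - 1) ^ 2 + 4 * c * Pq lam r s)).
  2: { pose proof (pow2_ge_0 (2 * s - 1)). pose proof (pow2_ge_0 (cnorm b)).
       apply Phi_nonincr; lra. }
  apply Rle_trans with (Phi (q * X1 + (1 - q) * X2)).
  2: { pose proof (pow2_ge_0 (2 * s - 1)). apply Phi_nonincr; lra. }
  unfold Lf. fold q. fold e2.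
  rewrite vnS_Phi, h_Phi. fold X1. fold X2.
  apply Phi_concave; lra.
Qed.

Lemma sum_lin {A : Type} (w x : A -> R) a b l :
  sumR (fun k => w k * (a + b * x k)) l = a * sumR w l + b * sumR (fun k => w k * x k) l.
Proof. induction l; simpl; [ring|]. rewrite IHl. ring. Qed.

Lemma sum_cmul {A : Type} (w : A -> R) m l : sumR (fun k => w k * m) l = m * sumR w l.
Proof. induction l; simpl; [ring|]. rewrite IHl. ring. Qed.

Lemma sum_le {A : Type} (f g : A -> R) l : Forall (fun k => f k <= g k) l -> sumR f l <= sumR g l.
Proof. induction 1; simpl; [apply Rle_refl|apply Rplus_le_compat; auto]. Qed.

Lemma Lf_aff lam r a s : (1 + lam) * r - 1 <> 0 ->
  Lf lam r a s = (h (1 - lam * r) + (vnS r a - h (1 - lam * r)) * (lam * r - 1) / ((1 + lam) * r - 1))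
     + ((vnS r a - h (1 - lam * r)) / ((1 + lam) * r - 1)) * s.
Proof. intros HD. unfold Lf, qf. field. auto. Qed.

Lemma Sfun_ge lam r a s : 0 < lam < 1 -> 0 <= r <= 1 -> cnorm a ^ 2 <= r * (1 - r) ->
  (1 + lam) * r - 1 <> 0 -> inJ lam r s -> Lf lam r a s <= Sfun lam r a s.
Proof.
  intros. unfold Sfun. apply main_bound; auto.
  rewrite cnorm_k0 by apply kappa_nonneg. lra.
Qed.

Lemma glb_unique E x y : is_glb E x -> is_glb E y -> x = y.
Proof. intros [H1 H2] [H3 H4]. apply Rle_antisym; [apply H4|apply H2]; auto. Qed.

Lemma part1 lam r a sbar : 0 < lam < 1 -> 0 <= r <= 1 -> cnorm a ^ 2 <= r * (1 - r) ->
  (1 + lam) * r - 1 <> 0 -> inJ lam r sbar ->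
  is_glb (xi_set lam r a sbar) (Lf lam r a sbar) /\
  exists d, is_decomp lam r sbar d /\
    Forall (fun ps => snd ps = r \/ snd ps = 1 - lam * r) d /\
    decomp_value lam r a d = Lf lam r a sbar.
Proof.
  intros Hl Hr Ha HD HJ.
  destruct (J_facts lam r sbar Hl Hr HD HJ) as [Hq [Hs _]].
  set (q := qf lam r sbar) in *.
  assert (HrJ : inJ lam r r) by (split; [apply Rmin_l|apply Rmax_l]).
  assert (HeJ : inJ lam r (1 - lam * r)) by (split; [apply Rmin_r|apply Rmax_r]).
  set (d := (q, r) :: (1 - q, 1 - lam * r) :: nil).
  assert (Hd : is_decomp lam r sbar d).
  { split; [|split].
    - unfold d. apply Forall_cons; [split; simpl; auto; lra|].
      apply Forall_cons; [split; simpl; auto; lra|]. apply Forall_nil.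
    - unfold d, sumR; cbn [fold_right fst snd]. ring.
    - unfold d, sumR; cbn [fold_right fst snd]. rewrite Hs. ring. }
  assert (Hv : decomp_value lam r a d = Lf lam r a sbar).
  { unfold decomp_value, d, sumR; cbn [fold_right fst snd].
    unfold Sfun. rewrite kappa_r by auto. rewrite kappa_e2, vnS_zero.
    rewrite (vnS_Phi r (cnorm a, 0)). rewrite cnorm_k0 by apply cnorm_nonneg.
    unfold Lf. fold q. rewrite vnS_Phi. ring. }
  split.
  - split.
    + intros x [d' [[HF [H1 H2]] ->]].
      unfold decomp_value.
      rewrite (Lf_aff lam r a sbar HD).
      rewrite <- H2.
      set (A0 := h (1 - lam * r) + (vnS r a - h (1 - lam * r)) * (lam * r - 1) / ((1 + lam) * r - 1)).
      set (B0 := (vnS r a - h (1 - lam * r)) / ((1 + lam) * r - 1)).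
      replace (A0 + B0 * sumR (fun ps : R * R => fst ps * snd ps) d')
        with (sumR (fun ps : R * R => fst ps * (A0 + B0 * snd ps)) d')
        by (rewrite sum_lin, H1; ring).
      apply sum_le. eapply Forall_impl; [|exact HF].
      intros [p s] [Hp HsJ]. cbn [fst snd] in *.
      apply Rmult_le_compat_l; auto.
      unfold A0, B0. rewrite <- Lf_aff by auto. apply Sfun_ge; auto.
    + intros b Hb. apply Hb. exists d. split; auto.
  - exists d. split; [exact Hd|split; [|exact Hv]].
    unfold d. apply Forall_cons; [simpl; auto|].
    apply Forall_cons; [simpl; auto|]. apply Forall_nil.
Qed.

Lemma holevo_bound lam r a c : 0 < lam < 1 -> 0 <= r <= 1 -> cnorm a ^ 2 <= r * (1 - r) ->
  (1 + lam) * r - 1 <> 0 -> is_code lam r a c ->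
  let sav := sumR (fun k => fst k * fst (snd k)) c in
  inJ lam r sav /\ holevo c <= h sav - Lf lam r a sav.
Proof.
  intros Hl Hr Ha HD [HF H1] sav.
  assert (HJ : inJ lam r sav).
  { split.
    - replace (Rmin r (1 - lam * r)) with (Rmin r (1 - lam * r) * sumR fst c) by (rewrite H1; ring).
      rewrite <- sum_cmul.
      apply sum_le. eapply Forall_impl; [|exact HF].
      intros [p [s b]] [Hp [[Hs1 Hs2] _]]. cbn [fst snd] in *. apply Rmult_le_compat_l; auto.
    - replace (Rmax r (1 - lam * r)) with (Rmax r (1 - lam * r) * sumR fst c) by (rewrite H1; ring).
      rewrite <- sum_cmul.
      apply sum_le. eapply Forall_impl; [|exact HF].
      intros [p [s b]] [Hp [[Hs1 Hs2] _]]. cbn [fst snd] in *. apply Rmult_le_compat_l; auto. }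
  split; [exact HJ|].
  destruct (J_facts lam r sav Hl Hr HD HJ) as [_ [_ [_ Hs01]]].
  unfold holevo. fold sav.
  assert (Hup : vnS sav (sumR (fun k => fst k * fst (snd (snd k))) c,
                         sumR (fun k => fst k * snd (snd (snd k))) c) <= h sav).
  { rewrite vnS_Phi, h_Phi. apply Phi_mono_ext.
    - split; [apply pow2_ge_0|]. nra.
    - pose proof (pow2_ge_0 (cnorm (sumR (fun k => fst k * fst (snd (snd k))) c,
                         sumR (fun k => fst k * snd (snd (snd k))) c))). lra. }
  assert (Hlow : Lf lam r a sav <= sumR (fun k => fst k * vnS (fst (snd k)) (snd (snd k))) c).
  { rewrite (Lf_aff lam r a sav HD).
    set (A0 := h (1 - lam * r) + (vnS r a - h (1 - lam * r)) * (lam * r - 1) / ((1 + lam) * r - 1)).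
    set (B0 := (vnS r a - h (1 - lam * r)) / ((1 + lam) * r - 1)).
    replace (A0 + B0 * sav)
      with (sumR (fun k : R * (R * Cpx) => fst k * (A0 + B0 * fst (snd k))) c)
      by (rewrite sum_lin, H1; unfold sav; ring).
    apply sum_le. eapply Forall_impl; [|exact HF].
    intros [p [s b]] [Hp [HsJ Hb]]. cbn [fst snd] in *.
    apply Rmult_le_compat_l; auto.
    unfold A0, B0. rewrite <- Lf_aff by auto. apply main_bound; auto. }
  lra.
Qed.

Theorem mainTheorem8 (E0 E1 kB T r : R) (alpha : Cpx) :
  E0 < E1 -> 0 < kB -> 0 < T ->
  0 <= r <= 1 -> cnorm alpha ^ 2 <= r * (1 - r) ->
  r <> gibbs (lamb E0 E1 kB T) ->
  let lam := lamb E0 E1 kB T in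
  (forall sbar, inJ lam r sbar ->
     let q := (sbar + lam * r - 1) / ((1 + lam) * r - 1) in
     let v := q * vnS r alpha + (1 - q) * h (1 - lam * r) in
     is_glb (xi_set lam r alpha sbar) v /\
     exists d, is_decomp lam r sbar d /\
       Forall (fun ps => snd ps = r \/ snd ps = 1 - lam * r) d /\
       decomp_value lam r alpha d = v) /\
  (exists sstar xstar,
     inJ lam r sstar /\ is_glb (xi_set lam r alpha sstar) xstar /\
     is_lub (chi_set lam r alpha) (h sstar - xstar) /\
     forall s x, inJ lam r s -> is_glb (xi_set lam r alpha s) x ->
       h s - x <= h sstar - xstar).
Proof.
  intros HE Hk HT Hr Ha Hg lam.
  assert (Hl : 0 < lam < 1).
  { unfold lam, lamb. split; [apply exp_pos|].
    rewrite <- exp_0. apply exp_increasing.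
    assert (0 < (E1 - E0) / (kB * T)) by (apply Rdiv_lt_0_compat; nra).
    unfold Rdiv in *. lra. }
  assert (HD : (1 + lam) * r - 1 <> 0).
  { intros H. apply Hg. fold lam. unfold gibbs.
    apply Rmult_eq_reg_l with (1 + lam); [|lra]. field_simplify; lra. }
  split.
  - intros sbar HJ q v. exact (part1 lam r alpha sbar Hl Hr Ha HD HJ).
  - assert (Hmm : Rmin r (1 - lam * r) <= Rmax r (1 - lam * r)) by apply Rmin_Rmax.
    destruct (continuity_ab_maj (fun s => h s - Lf lam r alpha s) _ _ Hmm) as [sstar [Hmax Hin]].
    { intros x _. apply continuity_pt_minus; [apply h_cont|].
      eapply continuity_pt_ext; [|apply cont_affine].
      intros y. symmetry. apply Lf_aff. auto. }
    assert (HJs : inJ lam r sstar) by exact Hin.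
    exists sstar, (Lf lam r alpha sstar).
    split; [exact HJs|]. split; [apply part1; auto|]. split.
    + split.
      * intros x [c [Hc ->]].
        destruct (holevo_bound lam r alpha c Hl Hr Ha HD Hc) as [HJc Hb].
        pose proof (Hmax _ HJc). cbv beta in H. lra.
      * intros b Hb. apply Hb.
        destruct (J_facts lam r sstar Hl Hr HD HJs) as [Hq [Hs _]].
        set (q := qf lam r sstar) in *.
        destruct alpha as [a1 a2].
        exists ((q / 2, (r, (a1, a2))) :: (q / 2, (r, (- a1, - a2))) ::
                (1 - q, (1 - lam * r, (0, 0))) :: nil).
        assert (HrJ : inJ lam r r) by (split; [apply Rmin_l|apply Rmax_l]).
        assert (HeJ : inJ lam r (1 - lam * r)) by (split; [apply Rmin_r|apply Rmax_r]).
        split.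
        -- split.
           ++ apply Forall_cons.
              { split; [simpl; lra|]. split; [exact HrJ|]. cbn [fst snd].
                rewrite kappa_r by auto. lra. }
              apply Forall_cons.
              { split; [simpl; lra|]. split; [exact HrJ|]. cbn [fst snd].
                rewrite kappa_r by auto. rewrite cnorm_opp. lra. }
              apply Forall_cons; [|apply Forall_nil].
              { split; [simpl; lra|]. split; [exact HeJ|]. cbn [fst snd].
                rewrite cnorm_k0 by lra. apply kappa_nonneg. }
           ++ unfold sumR; cbn [fold_right fst snd]. field.
        -- unfold holevo, sumR; cbn [fold_right fst snd].
           replace (q / 2 * r + (q / 2 * r + ((1 - q) * (1 - lam * r) + 0))) with sstar
             by (rewrite Hs; field).
           replace (q / 2 * a1 + (q / 2 * - a1 + ((1 - q) * 0 + 0)), q / 2 * a2 + (q / 2 * - a2 + ((1 - q) * 0 + 0)))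
             with (0, 0) by (f_equal; field).
           rewrite !vnS_zero.
           rewrite (vnS_Phi r (- a1, - a2)), cnorm_opp, <- vnS_Phi.
           unfold Lf. fold q. field.
    + intros s x HJ Hglb.
      rewrite (glb_unique _ _ _ Hglb (proj1 (part1 lam r alpha s Hl Hr Ha HD HJ))).
      apply (Hmax s HJ).
Qed.
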